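(* Let $n,k\in\mathbb{N}$ with $n\ge 2k$. A function $f\colon\binom{[n]}{k}\to\mathbb{R}$ satisfies $W^k(f)=0$ if and only if there exists $h\colon\binom{[n]}{k-1}\to\mathbb{R}$ such that for all $R\in\binom{[n]}{k}$, $f(R)=\sum_{S\subset R,\,|S|=k-1}h(S)$.
   Context: An $s$-permutation of $V$ is a sequence of $s$ distinct elements of $V$. For $k,r\in\mathbb{N}$, a finite set $V$ with $|V|\ge 2k\ge 2r$ and $f\colon\binom{V}{k}\to\mathbb{R}$, the level-$r$ weight of $f$ is \[ W^r(f)=\left(\mathbb{E}_{(a_1,b_1,\ldots,a_r,b_r)}\Big(\mathbb{E}_{R}\,(-1)^{|R\cap\{b_1,\ldots,b_r\}|}f(R)\Big)^2\right)^{1/2}, \] where $(a_1,b_1,\ldots,a_r,b_r)$ is a uniformly random $2r$-permutation of $V$, and, given it, $R$ is a uniformly random $k$-subset of $V$ with $|R\cap\{a_i,b_i\}|=1$ for each $i\in[r]$. Here $V=[n]$ and $r=k$. *)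

(* Defs.v *)
From HB Require Import structures.
From mathcomp Require Import all_boot all_order all_algebra.
From mathcomp Require Export reals.
Set Implicit Arguments. Unset Strict Implicit. Unset Printing Implicit Defensive.
Import Order.TTheory GRing.Theory Num.Theory.
Local Open Scope ring_scope.

Definition avg (R : realType) (T : finType) (A : {set T}) (F : T -> R) : R :=
  (#|A|%:R)^-1 * \sum_(x in A) F x.

(* 2r-permutations (a_1,b_1,...,a_r,b_r) of 'I_n, encoded as p i = (a_i, b_i),
   with all 2r entries distinct. *)
Definition perm2 (n r : nat) : {set {ffun 'I_r -> 'I_n * 'I_n}} :=
  [set p : {ffun 'I_r -> 'I_n * 'I_n} |
     uniq (flatten [seq [:: (p i).1; (p i).2] | i <- enum 'I_r])].

Definition admissible (n r k : nat) (p : {ffun 'I_r -> 'I_n * 'I_n}) :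
  {set {set 'I_n}} :=
  [set S : {set 'I_n} | (#|S| == k) &&
     [forall i : 'I_r, #|S :&: [set (p i).1; (p i).2]| == 1%N]].

Definition bset (n r : nat) (p : {ffun 'I_r -> 'I_n * 'I_n}) : {set 'I_n} :=
  [set (p i).2 | i : 'I_r].

(* Level-r weight W^r(f) of f : binom([n], k) -> R (values of f off k-sets are irrelevant). *)
Definition weight (R : realType) (n k r : nat) (f : {set 'I_n} -> R) : R :=
  Num.sqrt (avg (perm2 n r) (fun p =>
    (avg (admissible k p) (fun S => (-1) ^+ #|S :&: bset p| * f S)) ^+ 2)).

(* Main.v *)
Require Import Defs.
From HB Require Import structures.
From mathcomp Require Import all_boot all_order all_algebra.
From mathcomp Require Import reals.
From mathcomp Require Import zify.
Import Order.TTheory GRing.Theory Num.Theory.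
Local Open Scope ring_scope.
Set Implicit Arguments. Unset Strict Implicit. Unset Printing Implicit Defensive.

Section Main.
Variable R : realType.
Variable n : nat.
Implicit Types (P : {set 'I_n * 'I_n}) (A S T : {set 'I_n}).

Definition pset (pr : 'I_n * 'I_n) : {set 'I_n} := [set pr.1; pr.2].
Definition Eset P : {set 'I_n} := \bigcup_(pr in P) pset pr.
Definition Bset P : {set 'I_n} := [set pr.2 | pr in P].

Definition V (d : nat) P A S : R :=
  if [&& #|S| == d, [forall pr in P, #|S :&: pset pr| == 1%N] & A \subset S]
  then (-1) ^+ #|S :&: Bset P| else 0.

Lemma setI_set1 S (x : 'I_n) : S :&: [set x] = if x \in S then [set x] else set0.
Proof.
apply/setP => z; rewrite !inE; case: (z =P x) => [->|zx]; case: (x \in S); rewrite ?inE ?andbT ?andbF //.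
  by rewrite eqxx.
by move/eqP: zx => /negbTE ->.
Qed.

Lemma card_setI1 S (x : 'I_n) : #|S :&: [set x]| = (x \in S).
Proof. by rewrite setI_set1; case: (x \in S); rewrite ?cards1 ?cards0. Qed.

Lemma card_pair S (x y : 'I_n) : x != y ->
  #|S :&: [set x; y]| = ((x \in S) + (y \in S))%N.
Proof.
move=> xy.
rewrite setIUr cardsU !card_setI1.
suff -> : (S :&: [set x]) :&: (S :&: [set y]) = set0 by rewrite cards0 subn0.
apply/setP => z; rewrite !inE; case: (z =P x) => [->|]; rewrite ?andbF //=.
by rewrite (negbTE xy) !andbF.
Qed.

Lemma forall_setU1 (pr : 'I_n * 'I_n) P (Q : pred ('I_n * 'I_n)) :
  [forall x in pr |: P, Q x] = Q pr && [forall x in P, Q x].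
Proof.
apply/forall_inP/andP => [H|[H1 /forall_inP H2] x].
  split; first by apply: H; rewrite setU11.
  by apply/forall_inP => x xP; apply: H; rewrite setU1r.
by rewrite in_setU1 => /orP[/eqP->|]//; apply: H2.
Qed.

Lemma V_rec d P A (x y : 'I_n) : x != y -> y \notin Bset P ->
  forall S, V d ((x,y) |: P) A S = V d P (x |: A) S - V d P (y |: A) S.
Proof.
move=> xy yB S; rewrite /V forall_setU1 /pset /= card_pair // !subUset !sub1set.
have BU : Bset ((x, y) |: P) = y |: Bset P by rewrite /Bset imsetU1.
rewrite BU.
case: (#|S| == d); rewrite ?subr0 //=.
case: [forall pr in P, _]; rewrite ?andbF ?subr0 //=.
case: (A \subset S); rewrite ?andbF ?subr0 //=.
case xS: (x \in S); case yS: (y \in S) => /=; rewrite ?subrr ?subr0 ?sub0r //.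
- have -> : S :&: (y |: Bset P) = S :&: Bset P.
    apply/setP => z; rewrite !inE; case: eqP => [->|]; rewrite ?yS //.
  by [].
- have -> : S :&: (y |: Bset P) = y |: (S :&: Bset P).
    apply/setP => z; rewrite !inE; case: eqP => [->|]; rewrite ?yS //.
  by rewrite cardsU1 inE (negbTE yB) andbF /= exprS mulN1r.
Qed.


Definition valid P A : Prop :=
  [/\ (forall pr, pr \in P -> pr.1 != pr.2),
      (forall pr pr' z, pr \in P -> pr' \in P -> pr != pr' -> z \in pset pr -> z \notin pset pr') &
      (forall z, z \in Eset P -> z \notin A)].

Lemma Eset_U1 pr P : Eset (pr |: P) = pset pr :|: Eset P.
Proof.
apply/setP => z; rewrite inE; apply/bigcupP/orP.
  case=> pr'; rewrite in_setU1 => /orP[/eqP-> ->|pP zp]; first by left.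
  by right; apply/bigcupP; exists pr'.
case=> [zp|/bigcupP[pr' pP zp]]; first by exists pr; rewrite ?setU11.
by exists pr' => //; apply: setU1r.
Qed.

Lemma Eset0 : Eset set0 = set0.
Proof. by rewrite /Eset big_set0. Qed.

Lemma Bset0 : Bset set0 = set0.
Proof. by rewrite /Bset imset0. Qed.

Lemma Bset_sub P : Bset P \subset Eset P.
Proof.
apply/subsetP => z /imsetP[pr pP ->]; apply/bigcupP; exists pr => //.
by rewrite !inE eqxx orbT.
Qed.

Lemma in_Eset pr P z : pr \in P -> z \in pset pr -> z \in Eset P.
Proof. by move=> pP zp; apply/bigcupP; exists pr. Qed.

Lemma valid_split (x y : 'I_n) P A : valid ((x,y) |: P) A -> (x,y) \notin P ->
  [/\ x != y, x \notin Eset P, y \notin Eset P, x \notin A & y \notin A] /\ valid P A.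
Proof.
move=> [v1 v2 v3] xyP.
have xyin : (x, y) \in (x, y) |: P by rewrite setU11.
have notE z : z \in pset (x,y) -> z \notin Eset P.
  move=> zp; apply/negP => /bigcupP[pr' pP zp'].
  have ne : (x, y) != pr' by apply/negP => /eqP E; rewrite E pP in xyP.
  by have := v2 (x,y) pr' z xyin (setU1r _ pP) ne zp; rewrite zp'.
have inE' z : z \in pset (x,y) -> z \notin A.
  by move=> zp; apply: v3; rewrite Eset_U1 inE zp.
have px : x \in pset (x,y) by rewrite !inE eqxx.
have py : y \in pset (x,y) by rewrite !inE eqxx orbT.
split; first by split; [exact: (v1 _ xyin) | exact: notE | exact: notE | exact: inE' | exact: inE'].
split.
- by move=> pr pP; apply: v1; apply: setU1r.
- by move=> pr pr' z pP pP' ne; apply: v2 => //; apply: setU1r.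
- by move=> z zE; apply: v3; rewrite Eset_U1 inE zE orbT.
Qed.

Lemma valid_add (z : 'I_n) P A : valid P A -> z \notin Eset P -> valid P (z |: A).
Proof.
move=> [v1 v2 v3] zE; split => // w wE; rewrite in_setU1 negb_or v3 // andbT.
by apply/eqP => E; rewrite -E wE in zE.
Qed.

Lemma sum_pick (X : {set 'I_n}) (x0 : 'I_n) (F : 'I_n -> R) :
  x0 \in X -> (forall x, x \in X -> F x = (x == x0)%:R) -> \sum_(x in X) F x = 1.
Proof.
move=> x0X FE; rewrite (bigD1 x0) //= FE // eqxx big1 ?addr0 // => x /andP[xX xx0].
by rewrite FE // (negbTE xx0).
Qed.

Lemma sum_pickS (d : nat) (X : {set 'I_n}) (F : {set 'I_n} -> R) :
  (forall T, T \subset X -> #|T| == d -> F T = 0) -> 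
  \sum_(T : {set 'I_n} | (T \subset X) && (#|T| == d)) F T = 0.
Proof. by move=> H; rewrite big1 // => T /andP[]; apply: H. Qed.

Definition Up (d : nat) (h : {set 'I_n} -> R) S : R :=
  \sum_(T : {set 'I_n} | (T \subset S) && (#|T| == d)) h T.
Definition Dn (d : nat) (g : {set 'I_n} -> R) T : R :=
  \sum_(S : {set 'I_n} | (T \subset S) && (#|S| == d)) g S.

Lemma card_one_elt (X Y : {set 'I_n}) : X \subset Y -> #|Y| = #|X|.+1 ->
  exists2 z, z \notin X & Y :\: X = [set z].
Proof.
move=> XY cY.
have : #|Y :\: X| == 1%N by rewrite cardsD (setIidPr XY) cY subSn // subnn.
move/cards1P => [z zE]; exists z => //.
have : z \in Y :\: X by rewrite zE set11.
by rewrite inE => /andP[].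
Qed.

Lemma V0 d A S : V d set0 A S = ((#|S| == d) && (A \subset S))%:R.
Proof.
rewrite /V Bset0 setI0 cards0 expr0.
have -> : [forall pr in set0, #|S :&: pset pr| == 1%N] = true.
  by apply/forall_inP => pr; rewrite inE.
by case: (_ && _).
Qed.

Lemma setU1D1 (x a : 'I_n) A : a != x -> (x |: A) :\ a = x |: (A :\ a).
Proof.
move=> ax; apply/setP => z; rewrite !inE.
by case: (eqVneq z x) => [->|]; rewrite ?eqxx ?orbT ?andbT //= eq_sym.
Qed.

Lemma split_P m P : #|P| = m.+1 -> exists x y, [/\ P = (x,y) |: (P :\ (x,y)), (x,y) \notin P :\ (x,y) & #|P :\ (x,y)| = m].
Proof.
move=> cP; have : (0 < #|P|)%N by rewrite cP.
rewrite card_gt0 => /set0Pn [[x y] xyP]; exists x, y; split.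
- by rewrite setD1K.
- by rewrite setD11.
- by move: cP; rewrite (cardsD1 (x,y)) xyP add1n => [[]].
Qed.

Lemma Up_V d : forall m P A, #|P| = m -> valid P A -> (#|P| + #|A|)%N = d -> forall S, #|S| = d.+1 ->
  Up d (V d P A) S = \sum_(z in ~: (Eset P :|: A)) V d.+1 P (z |: A) S.
Proof.
elim=> [|m IH] P A cP vPA cPA S cS.
- move/eqP: cP; rewrite cards_eq0 => /eqP PE; subst P.
  move: cPA; rewrite cards0 add0n => cA.
  rewrite Eset0 set0U /Up.
  under eq_bigr => T /andP[_ /eqP cT] do rewrite V0 cT eqxx /=.
  under [RHS]eq_bigr => z _ do rewrite V0 cS eqxx /=.
  case AS: (A \subset S).
  + rewrite (bigD1 A) /=; last by rewrite AS cA eqxx.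
    rewrite subxx big1 ?addr0; last first.
      move=> T /andP[/andP[_ /eqP cT] TA].
      case AT: (A \subset T) => //.
      have : A == T by rewrite eqEcard AT cT cA leqnn.
      by rewrite eq_sym (negbTE TA).
    have [z0 z0A E] := card_one_elt AS (etrans cS (congr1 succn (esym cA))).
    apply/esym/(sum_pick (x0:=z0)); first by rewrite inE.
    move=> z; rewrite inE => zA; rewrite subUset sub1set AS andbT.
    have -> : (z \in S) = (z \in S :\: A) by rewrite inE zA.
    by rewrite E inE.
  + rewrite !big1 // => [z _|T /andP[TS _]].
      by rewrite subUset AS andbF.
    case AT: (A \subset T) => //.
    by rewrite (subset_trans AT TS) in AS.
- have [x [y [PE nP0 cP0]]] := split_P cP.
  move: (P :\ (x,y)) PE nP0 cP0 => P0 PE nP0 cP0; subst P.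
  have [[xy xE yE xA yA] vP0] := valid_split vPA nP0.
  have yB : y \notin Bset P0 by apply: contra yE; apply: (subsetP (Bset_sub P0)).
  have -> : Up d (V d ((x,y)|:P0) A) S = Up d (V d P0 (x|:A)) S - Up d (V d P0 (y |: A)) S.
    by rewrite /Up -sumrB; apply: eq_bigr => T _; rewrite V_rec.
  move: cPA; rewrite cardsU1 nP0 /= => cPA.
  rewrite !IH //; try (by rewrite cardsU1 ?xA ?yA /=; lia); try (by apply: valid_add).
  have C1 : ~: (Eset P0 :|: (x |: A)) = y |: ~: (Eset ((x,y)|:P0) :|: A).
    apply/setP => z; rewrite Eset_U1 !inE.
    case: (eqVneq z y) => [->|zy]; first by rewrite (negbTE yE) (negbTE yA) eq_sym (negbTE xy).
    by case: (z == x); case: (z \in Eset P0); case: (z \in A).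
  have C2 : ~: (Eset P0 :|: (y |: A)) = x |: ~: (Eset ((x,y)|:P0) :|: A).
    apply/setP => z; rewrite Eset_U1 !inE.
    case: (eqVneq z x) => [->|zx]; first by rewrite (negbTE xE) (negbTE xA) (negbTE xy).
    by case: (z == y); case: (z \in Eset P0); case: (z \in A).
  rewrite C1 C2 !big_setU1 /=; try (by rewrite Eset_U1 !inE eqxx ?orbT).
  under [RHS]eq_bigr => z _ do rewrite V_rec // (setUCA [set x] [set z] A) (setUCA [set y] [set z] A).
  rewrite sumrB (setUCA [set y] [set x] A).
  by rewrite opprD addrACA subrr add0r.
Qed.

Lemma Dn_V d : forall m P A, #|P| = m -> valid P A -> (#|P| + #|A|)%N = d.+1 -> forall T, #|T| = d ->
  Dn d.+1 (V d.+1 P A) T = \sum_(a in A) V d P (A :\ a) T.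
Proof.
elim=> [|m IH] P A cP vPA cPA T cT.
- move/eqP: cP; rewrite cards_eq0 => /eqP PE; subst P.
  move: cPA; rewrite cards0 add0n => cA.
  rewrite /Dn.
  under eq_bigr => S /andP[_ /eqP cS] do rewrite V0 cS eqxx /=.
  under [RHS]eq_bigr => a _ do rewrite V0 cT eqxx /=.
  case TA: (T \subset A).
  + rewrite (bigD1 A) /=; last by rewrite TA cA eqxx.
    rewrite subxx big1 ?addr0; last first.
      move=> S /andP[/andP[_ /eqP cS] SA].
      case AS: (A \subset S) => //.
      have : A == S by rewrite eqEcard AS cS cA leqnn.
      by rewrite eq_sym (negbTE SA).
    have [z0 z0T E] := card_one_elt TA (etrans cA (congr1 succn (esym cT))).
    have z0A : z0 \in A.
      have H : z0 \in A :\: T by rewrite E set11.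
      by move: H; rewrite inE => /andP[].
    apply/esym/(sum_pick (x0:=z0)) => // a aA.
    suff -> : (A :\ a \subset T) = (a == z0) by [].
    apply/idP/eqP.
    * move=> AaT; apply/eqP; apply: contraT => az0.
      have : z0 \in A :\ a by rewrite !inE z0A andbT eq_sym.
      by move/(subsetP AaT); rewrite (negbTE z0T).
    * move=> ->; apply/subsetP => w; rewrite !inE => /andP[wz0 wA]; apply: contraT => wT.
      have : w \in A :\: T by rewrite inE wT wA.
      by rewrite E inE (negbTE wz0).
  + rewrite !big1 // => [a aA|S /andP[TS /eqP cS]].
      case AaT: (A :\ a \subset T) => //.
      have cAa : #|A :\ a| = d by move: cA; rewrite (cardsD1 a) aA add1n => [[]].
      have : A :\ a == T by rewrite eqEcard AaT cT cAa leqnn.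
      move/eqP => E; have : T \subset A by rewrite -E subsetDl.
      by rewrite TA.
    case AS: (A \subset S) => //.
    have : A == S by rewrite eqEcard AS cS cA leqnn.
    by move/eqP => E; move: TA; rewrite E TS.
- have [x [y [PE nP0 cP0]]] := split_P cP.
  move: (P :\ (x,y)) PE nP0 cP0 => P0 PE nP0 cP0; subst P.
  have [[xy xE yE xA yA] vP0] := valid_split vPA nP0.
  have yB : y \notin Bset P0 by apply: contra yE; apply: (subsetP (Bset_sub P0)).
  have -> : Dn d.+1 (V d.+1 ((x,y)|:P0) A) T = Dn d.+1 (V d.+1 P0 (x|:A)) T - Dn d.+1 (V d.+1 P0 (y |: A)) T.
    by rewrite /Dn -sumrB; apply: eq_bigr => S _; rewrite V_rec.
  move: cPA; rewrite cardsU1 nP0 /= => cPA.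
  rewrite !IH //; try (by rewrite cardsU1 ?xA ?yA /=; lia); try (by apply: valid_add).
  rewrite !big_setU1 //= !setU1K //.
  have ne z a : z \notin A -> a \in A -> a != z by move=> zA aA; apply/eqP => E; rewrite -E aA in zA.
  rewrite (eq_bigr (fun a => V d P0 (x |: (A :\ a)) T)); last by move=> a aA; rewrite setU1D1 // ne.
  rewrite [X in _ - (_ + X)](eq_bigr (fun a => V d P0 (y |: (A :\ a)) T)); last by move=> a aA; rewrite setU1D1 // ne.
  under [RHS]eq_bigr => a _ do rewrite V_rec //.
  by rewrite sumrB opprD addrACA subrr add0r.
Qed.

Lemma uniq_flatten_disj (T U : eqType) (s : seq T) (F : T -> seq U) :
  uniq (flatten (map F s)) ->
  (forall x, x \in s -> uniq (F x)) /\
  (forall x y z, x \in s -> y \in s -> z \in F x -> z \in F y -> (F x != [::]) -> x = y).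
Proof.
elim: s => [|a s IH] /=; first by split.
rewrite cat_uniq => /and3P[ua dis /IH [H1 H2]]; split.
  by move=> x; rewrite inE => /orP[/eqP->|] //; apply: H1.
move=> x y z; rewrite !inE => /orP[/eqP->|xs] /orP[/eqP->|ys] zx zy ne //.
- have : z \in flatten (map F s) by apply/flattenP; exists (F y) => //; apply: map_f.
  by move=> zf; move/hasPn: dis => /(_ z zf); rewrite zx.
- have : z \in flatten (map F s) by apply/flattenP; exists (F x) => //; apply: map_f.
  by move=> zf; move/hasPn: dis => /(_ z zf); rewrite zy.
- by apply: (H2 x y z).
Qed.

Lemma flatten_disj_uniq (T U : eqType) (s : seq T) (F : T -> seq U) :
  uniq s -> (forall x, x \in s -> uniq (F x)) ->
  (forall x y z, x \in s -> y \in s -> z \in F x -> z \in F y -> x = y) ->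
  uniq (flatten (map F s)).
Proof.
elim: s => [|a s IH] //= /andP[as_ us] H1 H2.
rewrite cat_uniq H1 ?mem_head //= IH //; last first.
- by move=> x y z xs ys; apply: H2; rewrite inE ?xs ?ys orbT.
- by move=> x xs; apply: H1; rewrite inE xs orbT.
rewrite andbT; apply/hasPn => z /flattenP [l /mapP[y ys ->] zy]; apply/negP => za.
have ys' : y \in a :: s by rewrite inE ys orbT.
have E := H2 a y z (mem_head _ _) ys' za zy.
by rewrite E ys in as_.
Qed.

Variable k : nat.

Definition chi (p : {ffun 'I_k -> 'I_n * 'I_n}) S : R :=
  if S \in admissible k p then (-1) ^+ #|S :&: bset p| else 0.

Definition Pimg (p : {ffun 'I_k -> 'I_n * 'I_n}) : {set 'I_n * 'I_n} := [set p i | i : 'I_k].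

Lemma chi_V p S : chi p S = V k (Pimg p) set0 S.
Proof.
rewrite /chi /V inE sub0set andbT.
have -> : Bset (Pimg p) = bset p.
  apply/setP => z; apply/imsetP/imsetP => [[pr /imsetP[i _ ->] ->]|[i _ ->]].
    by exists i.
  by exists (p i) => //; apply/imsetP; exists i.
have -> : [forall pr in Pimg p, #|S :&: pset pr| == 1%N] =
          [forall i, #|S :&: [set (p i).1; (p i).2]| == 1%N].
  apply/forall_inP/forallP => [H i|H pr /imsetP[i _ ->]]; last by apply: H.
  by apply: (H (p i)); apply/imsetP; exists i.
by [].
Qed.

Lemma chi_card p S : #|S| != k -> chi p S = 0.
Proof. by move=> cS; rewrite /chi inE (negbTE cS). Qed.

Lemma perm2_valid p : p \in perm2 n k -> valid (Pimg p) set0 /\ #|Pimg p| = k.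
Proof.
rewrite inE => /(uniq_flatten_disj) [H1 H2].
set F := (fun i : 'I_k => [:: (p i).1; (p i).2]) in H1 H2.
have inj : injective p.
  move=> i j E; apply: (H2 i j (p i).1); rewrite ?mem_enum //.
  - by rewrite inE eqxx.
  - by rewrite E inE eqxx.
split; last by rewrite card_imset // card_ord.
split.
- move=> pr /imsetP[i _ ->]; have := H1 i (mem_enum _ i).
  by rewrite /F /= inE andbT.
- move=> pr pr' z /imsetP[i _ ->] /imsetP[j _ ->] ne zi; apply/negP => zj.
  have E : i = j.
    apply: (H2 i j z); rewrite ?mem_enum //.
    + by move: zi; rewrite /F /= !inE.
    + by move: zj; rewrite /F /= !inE.
  by rewrite E eqxx in ne.
- by move=> z _; rewrite inE.
Qed.

Lemma valid_perm2 P : valid P set0 -> #|P| = k -> exists2 p, p \in perm2 n k & Pimg p = P.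
Proof.
move=> [v1 v2 _] cP.
pose p := [ffun i => enum_val (A := mem P) (cast_ord (esym cP) i)].
have pP i : p i \in P by rewrite ffunE; apply: enum_valP.
have inj : injective p.
  by move=> i j; rewrite !ffunE => /enum_val_inj /cast_ord_inj.
have im : Pimg p = P.
  apply/setP => pr; apply/imsetP/idP => [[i _ ->]|prP]; first exact: pP.
  exists (cast_ord cP (enum_rank_in prP pr)) => //.
  by rewrite ffunE cast_ordK enum_rankK_in.
clearbody p.
exists p => //.
rewrite inE; apply: flatten_disj_uniq.
- exact: enum_uniq.
- move=> i _ /=; rewrite inE andbT; apply: v1; exact: pP.
- move=> i j z _ _ /= zi zj; apply: inj; apply/eqP; apply: contraT => ne.
  have zi' : z \in pset (p i) by move: zi; rewrite !inE.
  have zj' : z \in pset (p j) by move: zj; rewrite !inE.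
  by have := v2 (p i) (p j) z (pP i) (pP j) ne zi'; rewrite zj'.
Qed.

Definition inM (g : {set 'I_n} -> R) : Prop :=
  exists h : {set 'I_n} -> R, exists c : {ffun 'I_k -> 'I_n * 'I_n} -> R,
  forall S, #|S| = k -> g S = Up k.-1 h S + \sum_(p in perm2 n k) c p * chi p S.

Lemma inM_ext g g' : inM g -> (forall S, #|S| = k -> g' S = g S) -> inM g'.
Proof. by move=> [h [c H]] E; exists h, c => S cS; rewrite E // H. Qed.

Lemma inM0 : inM (fun _ => 0).
Proof.
exists (fun _ => 0), (fun _ => 0) => S _.
by rewrite /Up !big1 ?addr0 // => p _; rewrite mul0r.
Qed.

Lemma inM_add g1 g2 : inM g1 -> inM g2 -> inM (fun S => g1 S + g2 S).
Proof.
move=> [h1 [c1 H1]] [h2 [c2 H2]].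
exists (fun T => h1 T + h2 T), (fun p => c1 p + c2 p) => S cS.
rewrite H1 // H2 // /Up !big_split /=.
under [X in _ = _ + X]eq_bigr => p _ do rewrite mulrDl.
by rewrite big_split /= addrACA.
Qed.

Lemma inM_scale r g : inM g -> inM (fun S => r * g S).
Proof.
move=> [h [c H]].
exists (fun T => r * h T), (fun p => r * c p) => S cS.
rewrite H // mulrDr /Up !mulr_sumr.
by congr (_ + _); apply: eq_bigr => p _; rewrite mulrA.
Qed.

Lemma inM_sum (I : finType) (Q : pred I) (F : I -> {set 'I_n} -> R) :
  (forall i, Q i -> inM (F i)) -> inM (fun S => \sum_(i | Q i) F i S).
Proof.
move=> H.
suff : forall s, inM (fun S => \sum_(i <- s | Q i) F i S) by apply.
elim=> [|i s IH].
  by apply: (inM_ext inM0) => S _; rewrite big_nil.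
case Qi: (Q i).
  by apply: (inM_ext (inM_add (H i Qi) IH)) => S _; rewrite big_cons Qi.
by apply: (inM_ext IH) => S _; rewrite big_cons Qi.
Qed.

Lemma inM_Up h : inM (Up k.-1 h).
Proof.
exists h, (fun _ => 0) => S _.
by rewrite big1 ?addr0 // => p _; rewrite mul0r.
Qed.

Lemma inM_chi p : p \in perm2 n k -> inM (chi p).
Proof.
move=> pP; exists (fun _ => 0), (fun q => (q == p)%:R) => S _.
rewrite /Up big1 ?add0r //.
rewrite (bigD1 p) //= eqxx mul1r big1 ?addr0 // => q /andP[_ /negbTE ->].
by rewrite mul0r.
Qed.

Lemma valid_ext (q y : 'I_n) P A : valid P A -> q \notin Eset P -> y \notin Eset P ->
  q != y -> q \notin A -> y \notin A -> valid ((q,y) |: P) A.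
Proof.
move=> [v1 v2 v3] qE yE qy qA yA.
have nE z pr : pr \in P -> z \in pset (q,y) -> z \notin pset pr.
  move=> prP zqy; apply/negP => zpr.
  have : z \in Eset P by apply: in_Eset zpr.
  by move: zqy; rewrite !inE => /orP[] /eqP ->; rewrite ?(negbTE qE) ?(negbTE yE).
split.
- by move=> pr /setU1P[->|]; [exact: qy | apply: v1].
- move=> pr pr' z /setU1P[->|prP] /setU1P[->|prP'] ne.
  + by rewrite eqxx in ne.
  + by move=> zpr; apply: (nE z pr' prP' zpr).
  + move=> zpr; apply/negP => zqy.
    by have := nE z pr prP zqy; rewrite zpr.
  + by apply: v2.
- move=> z; rewrite Eset_U1 inE => /orP[|]; last by apply: v3.
  by rewrite !inE => /orP[] /eqP ->.
Qed.

Lemma main_ind : (0 < k)%N -> forall m P A, valid P A -> (#|P| + #|A|)%N = k -> #|A| = m -> inM (V k P A).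
Proof.
move=> k0; elim=> [|m IH] P A vPA cPA cA.
  move/eqP: cA; rewrite cards_eq0 => /eqP AE; subst A.
  move: cPA; rewrite cards0 addn0 => cP.
  have [p pP im] := valid_perm2 vPA cP.
  by apply: (inM_ext (inM_chi pP)) => S _; rewrite chi_V im.
have : (0 < #|A|)%N by rewrite cA.
rewrite card_gt0 => /set0Pn [q qA].
move: (A :\ q) (setD1K qA) (setD11 q A) => A0 AE /negbT qA0; subst A.
have cA0 : #|A0| = m by move: cA; rewrite cardsU1 qA0 add1n => [[]].
have [v1 v2 v3] := vPA.
have qE : q \notin Eset P by apply/negP => /v3; rewrite setU11.
have vPA0 : valid P A0.
  split => // z zE; apply/negP => zA; move: (v3 z zE); rewrite in_setU1 zA orbT.
  by [].
set Y := ~: (Eset P :|: (q |: A0)).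
have HY y : y \in Y -> [/\ y \notin Eset P, y \notin A0 & q != y].
  rewrite !inE !negb_or => /and3P[yE yq yA]; split => //.
  by rewrite eq_sym.
have Hrec y S : y \in Y -> V k ((q,y) |: P) A0 S = V k P (q |: A0) S - V k P (y |: A0) S.
  move/HY => [yE yA qy]; apply: V_rec => //.
  by apply: contra yE; apply: (subsetP (Bset_sub P)).
have HM y : y \in Y -> inM (V k ((q,y) |: P) A0).
  move=> yY; have [yE yA qy] := HY y yY.
  apply: (IH _ _ (valid_ext vPA0 qE yE qy qA0 yA)) => //.
  rewrite cardsU1 addnAC -cPA cardsU1 qA0.
  have -> : ((q,y) \notin P) = true.
    by apply/negP => qyP; move: qE; rewrite (in_Eset qyP) // !inE eqxx.
  by rewrite /= cA0; lia.
have cUp : (#|P| + #|A0|)%N = k.-1.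
  by move: cPA; rewrite cardsU1 qA0 /=; lia.
have HU S : #|S| = k -> Up k.-1 (V k.-1 P A0) S = V k P (q |: A0) S + \sum_(z in Y) V k P (z |: A0) S.
  move=> cS.
  have := Up_V (erefl #|P|) vPA0 cUp (S := S); rewrite prednK // => ->; last by [].
  have -> : ~: (Eset P :|: A0) = q |: Y.
    apply/setP => z; rewrite /Y !inE.
    case: (eqVneq z q) => [->|zq]; first by rewrite (negbTE qE) (negbTE qA0).
    by [].
  by rewrite big_setU1 //= /Y !inE eqxx !orbT.
apply: (inM_ext (inM_scale (#|Y|.+1%:R)^-1 (inM_add (inM_Up (V k.-1 P A0)) (inM_sum (Q := mem Y) HM)))).
move=> S cS /=; rewrite HU //.
under [X in _ * (_ + X)]eq_bigr => y yY do rewrite Hrec //.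
rewrite sumrB sumr_const addrACA subrr addr0.
have -> : V k P (q |: A0) S + V k P (q |: A0) S *+ #|Y| = #|Y|.+1%:R * V k P (q |: A0) S.
  by rewrite mulr_natl mulrS.
by rewrite mulKf // pnatr_eq0.
Qed.

Lemma every_inM (f : {set 'I_n} -> R) : (0 < k)%N -> inM f.
Proof.
move=> k0.
apply: (inM_ext (inM_sum (Q := fun A => #|A| == k) (F := fun A S => f A * V k set0 A S) _)).
  move=> A /eqP cA; apply: inM_scale; apply: (main_ind k0 (m := #|A|)) => //.
    split => //; [by move=> pr; rewrite inE | by move=> pr pr' z; rewrite inE | by move=> z; rewrite Eset0 inE].
  by rewrite cards0 add0n.
move=> S cS /=; rewrite (bigD1 S) /=; last by rewrite cS.
rewrite V0 cS eqxx subxx mulr1 big1 ?addr0 // => A /andP[/eqP cA AS].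
rewrite V0 cS eqxx /=.
case AS': (A \subset S); last by rewrite mulr0.
have : A == S by rewrite eqEcard AS' cS cA leqnn.
by rewrite (negbTE AS).
Qed.

Lemma ortho p (h : {set 'I_n} -> R) : (0 < k)%N -> p \in perm2 n k ->
  \sum_S chi p S * Up k.-1 h S = 0.
Proof.
move=> k0 pP; have [vP cP] := perm2_valid pP.
have D0 T : #|T| = k.-1 -> \sum_(S : {set 'I_n} | T \subset S) chi p S = 0.
  move=> cT; rewrite (bigID (fun S : {set 'I_n} => #|S| == k)) /= [X in _ + X]big1 ?addr0; last first.
    by move=> S /andP[_ cS]; apply: chi_card.
  have sz : (#|Pimg p| + #|(set0 : {set 'I_n})|)%N = k.-1.+1 by rewrite cards0 addn0 prednK.
  have := Dn_V (erefl _) vP sz cT.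
  rewrite big_set0 /Dn (prednK k0) => H; apply: etrans H.
  by apply: eq_bigr => S _; rewrite chi_V.
rewrite /Up.
under eq_bigr => S _ do rewrite mulr_sumr.
rewrite (exchange_big_dep (fun T => #|T| == k.-1)) /=; last by move=> S T _ /andP[].
apply: big1 => T /eqP cT; rewrite -mulr_suml.
rewrite (eq_bigl (fun S => T \subset S)) ?D0 ?mul0r // => S.
by rewrite cT eqxx andbT.
Qed.

End Main.

Unset Implicit Arguments.

Theorem lemma2p7 (R : realType) (n k : nat) (hk : (0 < k)%N) (hn : (2 * k <= n)%N)
  (f : {set 'I_n} -> R) :
  weight k k f = 0 <->
  exists h : {set 'I_n} -> R, forall S : {set 'I_n}, #|S| = k ->
    f S = \sum_(T : {set 'I_n} | (T \subset S) && (#|T| == k.-1)) h T.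
Proof.
split.
- move=> Hw.
  have Hp : forall p, p \in perm2 n k -> \sum_S @chi R n k p S * f S = 0.
    move=> p pP.
    have : avg (perm2 n k) (fun p => (avg (admissible k p) (fun S => (-1)^+#|S :&: bset p| * f S))^+2) <= 0.
      by rewrite -sqrtr_eq0; apply/eqP; exact: Hw.
    rewrite /avg pmulr_rle0; last first.
      by rewrite invr_gt0 ltr0n card_gt0; apply/set0Pn; exists p.
    move=> Hle.
    have Hs : \sum_(q in perm2 n k) (avg (admissible k q) (fun S => (-1)^+#|S :&: bset q| * f S))^+2 = 0.
      by apply/eqP; rewrite eq_le Hle sumr_ge0 // => q _; exact: sqr_ge0.
    have := psumr_eq0P (fun q _ => sqr_ge0 _) Hs pP.
    move/eqP; rewrite sqrf_eq0 /avg mulf_eq0 invr_eq0 pnatr_eq0 cards_eq0 => /orP[/eqP admE|/eqP Hsum].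
      by rewrite big1 // => S _; rewrite /chi admE inE mul0r.
    apply: (etrans _ Hsum); rewrite [RHS]big_mkcond; apply: eq_bigr => S _; rewrite /chi.
    by case: ifP; rewrite ?mul0r.
  have [h [c Hf]] := every_inM f hk.
  exists h.
  pose g := fun S => \sum_(p in perm2 n k) c p * @chi R n k p S.
  have g0 (S : {set 'I_n}) : #|S| != k -> g S = 0.
    by move=> cS; rewrite /g big1 // => p _; rewrite chi_card // mulr0.
  have Hsum : \sum_S g S ^+ 2 = 0.
    transitivity (\sum_S g S * (f S - Up k.-1 h S)).
      apply: eq_bigr => S _; case: (eqVneq #|S| k) => cS.
        by rewrite Hf // addrAC subrr add0r expr2.
      by rewrite g0 // expr2 !mul0r.
    rewrite /g; under eq_bigr => S _ do rewrite mulr_suml.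
    rewrite exchange_big /=; apply: big1 => p pP.
    under eq_bigr => S _ do rewrite -mulrA.
    rewrite -mulr_sumr.
    suff -> : \sum_S @chi R n k p S * (f S - Up k.-1 h S) = 0 by rewrite mulr0.
    under eq_bigr => S _ do rewrite mulrBr.
    by rewrite sumrB Hp // ortho // subrr.
  move=> S cS; rewrite Hf //.
  have := psumr_eq0P (fun S _ => sqr_ge0 (g S)) Hsum (i := S) isT.
  by move/eqP; rewrite sqrf_eq0 /g => /eqP ->; rewrite addr0.
- move=> [h Hh].
  rewrite /weight /avg big1 ?mulr0 ?sqrtr0 // => p pP.
  have -> : \sum_(S in admissible k p) (-1)^+#|S :&: bset p| * f S = 0.
    apply: (etrans _ (ortho h hk pP)); rewrite big_mkcond /=.
    apply: eq_bigr => S _; rewrite /chi; case: ifP => [Sadm|]; last by rewrite mul0r.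
    by rewrite Hh //; move: Sadm; rewrite inE => /andP[/eqP].
  by rewrite mulr0 expr2 mulr0.
Qed.
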